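(* Let $v$ be a vertex of a pasting scheme. There do not exist four distinct edges $e:u\to v$, $b:v\to w$, $a:q\to v$, $f:v\to p$ incident to $v$ that appear in the clockwise cyclic order of edges around $v$ in the order $e,b,a,f$ (possibly with other edges in between). Equivalently, in the cyclic order around $v$ the incoming edges form one consecutive block and the outgoing edges another.
   Context: A plane graph is a finite connected directed graph $G$ with an embedding in the plane $\mathbb C$; the edges incident to a vertex inherit a clockwise cyclic order from the orientation of the plane. Its faces are the closures of the connected components of $\mathbb C\setminus G$; the unbounded one is the exterior face, the others interior faces. Each edge has a face on its left and one on its right. The exterior face is anchorable if the set of edges having the exterior face on their left and the set having it on their right each form a nonempty directed path from a vertex $s_G$ to a vertex $t_G$. An interior face $F$ is anchorable if the set of edges having $F$ on their right and the set having $F$ on their left each form a nonempty directed path from $s_F$ to $t_F$, with no common edges and no common vertices other than $s_F,t_F$. A pasting scheme is a finite connected plane graph all of whose faces are anchorable, with $s_G$ the only vertex with no incoming edges and $t_G$ the only vertex with no outgoing edges. *)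

(* Defs.v *)
(* A plane graph is encoded as a combinatorial map
   (rotation system) of genus 0 with a designated exterior face. *)
From mathcomp Require Import all_boot.
Set Implicit Arguments. Unset Strict Implicit. Unset Printing Implicit Defensive.

Section PlaneGraph.
Variables (V E : finType) (src tgt : E -> V).

(* Darts (half-edges): (e, true) is the end of e at src e (pointing along e),
   (e, false) is the end of e at tgt e (pointing backwards along e). *)
Definition dvert (d : E * bool) : V := if d.2 then src d.1 else tgt d.1.

Definition alpha (d : E * bool) : E * bool := (d.1, ~~ d.2).

Variable rot : E * bool -> E * bool.
(* rot d = the next dart clockwise around the vertex dvert d. *)

(* Face permutation: walking along a dart and then turning to the next dart
   clockwise around the reached vertex traverses the face lying on the LEFT
   of the darts (darts oriented away from their vertex). *)
Definition phi (d : E * bool) : E * bool := rot (alpha d).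

Definition rotation_system : Prop :=
  [/\ injective rot,
      forall d, dvert (rot d) = dvert d,
      forall d d', dvert d = dvert d' -> fconnect rot d d'
    & forall v, exists d, dvert d = v].

Definition map_connected : Prop :=
  forall d d', connect (fun x y => (y == rot x) || (y == alpha x)) d d'.

(* genus 0 (Euler's formula V - E + F = 2 for a connected map) *)
Definition genus0 : Prop := #|V| + fcard phi predT = #|E| + 2.

Definition plane_graph : Prop :=
  [/\ rotation_system, map_connected & genus0].

Definition face_left (x : E * bool) (e : E) : bool := fconnect phi x (e, true).
Definition face_right (x : E * bool) (e : E) : bool := fconnect phi x (e, false).

Fixpoint walk (x : V) (p : seq E) : bool :=
  if p is e :: p' then (src e == x) && walk (tgt e) p' else true.

Definition pverts (s : V) (p : seq E) : seq V := s :: map tgt p.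

Definition dpath (s t : V) (p : seq E) : bool :=
  [&& p != [::], walk s p, last s (map tgt p) == t & uniq (pverts s p)].

Definition forms_path (P : E -> bool) (s t : V) (p : seq E) : Prop :=
  dpath s t p /\ forall e, (e \in p) = P e.

Definition exterior_anchorable (d0 : E * bool) (s t : V) : Prop :=
  exists pl pr, forms_path (face_left d0) s t pl /\ forms_path (face_right d0) s t pr.

Definition interior_anchorable (x : E * bool) : Prop :=
  exists (s t : V) (pr pl : seq E),
    [/\ forms_path (face_right x) s t pr, forms_path (face_left x) s t pl,
        forall e, e \in pr -> e \notin pl
      & forall v, v \in pverts s pr -> v \in pverts s pl -> v = s \/ v = t].

Definition pasting_scheme (d0 : E * bool) : Prop :=
  plane_graph /\
  exists sG tG : V,
    [/\ exterior_anchorable d0 sG tG,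
        forall x, ~~ fconnect phi d0 x -> interior_anchorable x,
        forall v, (forall e, tgt e != v) <-> v = sG
      & forall v, (forall e, src e != v) <-> v = tG].

Definition cyc_ordered (d1 d2 d3 d4 : E * bool) : bool :=
  [&& fconnect rot d1 d2, fconnect rot d1 d3, fconnect rot d1 d4,
      findex rot d1 d2 < findex rot d1 d3 & findex rot d1 d3 < findex rot d1 d4].

End PlaneGraph.

(* Main.v *)
Require Import Defs.
From mathcomp Require Import all_boot.
From mathcomp Require Import zify.
Set Implicit Arguments. Unset Strict Implicit. Unset Printing Implicit Defensive.

Lemma step_lem (p : nat -> bool) i : ~~ p 0 -> p i -> exists2 m, m < i & ~~ p m && p m.+1.
Proof.
elim: i => [|i IH] p0 pi; first by rewrite pi in p0.
case: (boolP (p i)) => [/(IH p0) [m mi H]|npi]; first by exists m => //; exact: ltnW.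
by exists i => //; rewrite npi pi.
Qed.

Lemma trans_lem (T : finType) (f : T * bool -> T * bool) x y bb :
  fconnect f x y -> x.2 = bb -> y.2 != bb ->
  exists z, [&& fconnect f x z, z.2 == bb & (f z).2 != bb].
Proof.
move=> cxy x2 y2.
have p0 : ~~ ((fun m => (iter m f x).2 != bb) 0) by rewrite /= x2 eqxx.
have pi : (fun m => (iter m f x).2 != bb) (findex f x y) by rewrite /= iter_findex.
have [m _ /andP [H1 H2]] := @step_lem (fun m => (iter m f x).2 != bb) _ p0 pi.
exists (iter m f x); rewrite fconnect_iter /=.
by rewrite negbK in H1; rewrite H1 -iterS.
Qed.

Lemma iter_pres (T U : Type) (f : T -> T) (g : T -> U) :
  (forall x, g (f x) = g x) -> forall n x, g (iter n f x) = g x.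
Proof. by move=> H; elim=> //= n IH x; rewrite H IH. Qed.

Lemma conn_pres (T : finType) (U : Type) (f : T -> T) (g : T -> U) :
  (forall x, g (f x) = g x) -> forall x y, fconnect f x y -> g y = g x.
Proof. by move=> H x y /iter_findex <-; apply: iter_pres. Qed.

Lemma arith (w cw e a F nv nm nmv io oi : nat) :
  w + cw = 2 * e -> a = cw -> 2 * F <= a -> F + nv = e + 2 -> nv = nm + 2 ->
  nm = nmv + 1 -> io + oi <= w -> nm <= oi -> nmv + 2 <= io -> False.
Proof. lia. Qed.

Theorem mainTheorem11 (V E : finType) (src tgt : E -> V)
    (rot : E * bool -> E * bool) (d0 : E * bool) (v : V) :
  pasting_scheme src tgt rot d0 ->
  ~ exists e b a f : E,
      [/\ uniq [:: e; b; a; f],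
          [/\ tgt e = v, src b = v, tgt a = v & src f = v]
        & cyc_ordered rot (e, false) (b, true) (a, false) (f, true)].
Proof.
move=> [[[rinj rdv rcon rsurj] conn g0] [sG [tG [ext int Hs Ht]]]].
move=> [e [b [a [f [Hu [He Hb Ha Hf] Hc]]]]].
set D := (E * bool)%type.
have ainj : injective (alpha (E:=E)).
  by move=> [x1 y1] [x2 y2] [-> /negbLR]; rewrite negbK => ->.
have pinj : injective (phi rot) by move=> x y /rinj /ainj.
have both : forall (x : D) bb, exists y, fconnect (phi rot) x y && (y.2 == bb).
  move=> x bb.
  have key : forall c (pp : seq E), pp != [::] -> (forall e0, (e0 \in pp) = fconnect (phi rot) x (e0, c)) ->
     exists y, fconnect (phi rot) x y && (y.2 == c).
    move=> c; case=> // e0 pp _ Hp; exists (e0, c); rewrite eqxx andbT -Hp.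
    by rewrite inE eqxx.
  case: (boolP (fconnect (phi rot) d0 x)) => cx.
    have [pl [pr [[/andP [pl0 _] Hl] [/andP [pr0 _] Hr]]]] := ext.
    case: bb.
      apply: (key _ pl pl0) => e0; rewrite Hl /face_left.
      by rewrite (same_connect (fconnect_sym pinj) cx).
    apply: (key _ pr pr0) => e0; rewrite Hr /face_right.
    by rewrite (same_connect (fconnect_sym pinj) cx).
  have [s [t [pr [pl [[/andP [pr0 _] Hr] [/andP [pl0 _] Hl] _ _]]]]] := int x cx.
  by case: bb; [apply: (key _ pl pl0) | apply: (key _ pr pr0)].
have trans : forall (x : D) bb, exists y, [&& fconnect (phi rot) x y, y.2 == bb & (phi rot y).2 != bb].
  move=> x bb; have [y1 /andP[c1 e1]] := both x bb; have [y2 /andP [c2 e2]] := both x (~~bb).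
  have c12 : fconnect (phi rot) y1 y2.
    by apply: connect_trans c2; rewrite fconnect_sym.
  have n2 : y2.2 != bb by rewrite (eqP e2); case: bb {e1 e2}.
  have [z /and3P [cz ez fz]] := trans_lem c12 (eqP e1) n2.
  by exists z; rewrite ez fz (connect_trans c1 cz).
pose h (rb : D * bool) := odflt rb.1 [pick y | [&& fconnect (phi rot) rb.1 y, y.2 == rb.2 & (phi rot y).2 != rb.2]].
have hP : forall rb : D * bool, [&& fconnect (phi rot) rb.1 (h rb), (h rb).2 == rb.2 & (phi rot (h rb)).2 != rb.2].
  move=> [r c] /=; rewrite /h; case: pickP => //= H; have [y Hy] := trans r c.
  by move: (H y); rewrite Hy.
set A' := [set y : D | (phi rot y).2 != y.2].
set R2 := setX [set r : D | froots (phi rot) r] [set: bool].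
have cardA : 2 * fcard (phi rot) predT <= #|A'|.
  have -> : 2 * fcard (phi rot) predT = #|R2|.
    rewrite cardsX cardsT card_bool mulnC; congr (_ * _).
    by apply: eq_card => r; rewrite !inE andbT.
  rewrite -(card_in_imset (f:=h) (D:=R2)).
    apply: subset_leq_card; apply/subsetP => y /imsetP [rb _ ->]; rewrite inE.
    by have /and3P [_ /eqP -> e2] := hP rb.
  move=> [r c] [r' c']; rewrite !inE /= => /andP [rr _] /andP [rr' _] Eh.
  have /and3P [c1 /eqP e1 _] := hP (r,c); have /and3P[c1' /eqP e1' _] := hP (r',c').
  rewrite Eh /= in c1 e1.
  have : froot (phi rot) r = froot (phi rot) r'.
    by rewrite (rootP (fconnect_sym pinj) c1) (rootP (fconnect_sym pinj) c1').
  by rewrite (eqP rr) (eqP rr') => ->; rewrite -e1 e1'.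
set W := [set d : D | d.2 != (rot d).2].
have cardW : #|A'| = #|~: W|.
  have -> : A' = @alpha E @^-1: (~: W).
    apply/setP => -[x c]; rewrite !inE /phi /alpha /=.
    by case: (rot (x, ~~c)) => y' []; case: c.
  exact: card_preimset.
have totW : #|W| + #|~: W| = 2 * #|E|.
  by rewrite cardsC card_prod card_bool mulnC.
have vsG : forall u, u != sG -> exists x : D, (dvert src tgt x == u) && (x.2 == false).
  move=> u uS; case: (boolP [exists x, tgt x == u]) => [/existsP [x /eqP xu]|/existsPn H].
    by exists (x, false); rewrite /dvert /= xu eqxx.
  by move: uS; rewrite ((proj1 (Hs u)) (fun x => H x)) eqxx.
have vtG : forall u, u != tG -> exists x : D, (dvert src tgt x == u) && (x.2 == true).
  move=> u uT; case: (boolP [exists x, src x == u]) => [/existsP [x /eqP xu]|/existsPn H].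
    by exists (x, true); rewrite /dvert /= xu eqxx.
  by move: uT; rewrite ((proj1 (Ht u)) (fun x => H x)) eqxx.
have sGtG : sG != tG.
  apply/eqP => est; have [[x c] dx] := rsurj sG; move: dx; rewrite /dvert /=; case: c => /= dx.
    by move: (proj2 (Ht tG) erefl x); rewrite dx est eqxx.
  by move: (proj2 (Hs sG) erefl x); rewrite dx eqxx.
set M := [set: V] :\ sG :\ tG.
have inM : forall u, (u \in M) = (u != sG) && (u != tG).
  by move=> u; rewrite !inE andbT andbC.
have cardM : #|V| = #|M| + 2.
  rewrite -cardsT (cardsD1 sG) (cardsD1 tG (_ :\ sG)) !inE eq_sym sGtG /=; rewrite /M; lia.
pose g bb u := odflt d0 [pick z : D | [&& dvert src tgt z == u, z.2 == bb & (rot z).2 != bb]].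
have gP : forall bb u, u \in M -> [&& dvert src tgt (g bb u) == u, (g bb u).2 == bb & (rot (g bb u)).2 != bb].
  move=> bb u; rewrite inM => /andP [uS uT]; rewrite /g; case: pickP => //= H.
  have [x /andP [/eqP dx x2]] := vsG u uS; have [y /andP [/eqP dy y2]] := vtG u uT.
  have ex : forall (x y : D), dvert src tgt x = u -> dvert src tgt y = u -> x.2 = bb -> y.2 != bb -> False.
    move=> x' y' dx' dy' x2' y2'.
    have [z /and3P [cz ez fz]] := trans_lem (rcon x' y' (etrans dx' (esym dy'))) x2' y2'.
    move: (H z); rewrite ez fz -dx' (conn_pres rdv cz) eqxx //.
  case: bb {H} ex => ex.
    by exfalso; apply: (ex y x dy dx (eqP y2)); rewrite (eqP x2).
  by exfalso; apply: (ex x y dx dy (eqP x2)); rewrite (eqP y2).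
set Wio := [set d : D | ~~ d.2 && (rot d).2].
set Woi := [set d : D | d.2 && ~~ (rot d).2].
have WW : #|Wio| + #|Woi| <= #|W|.
  rewrite -cardsUI.
  have -> : Wio :&: Woi = set0 by apply/setP => d; rewrite !inE; case: (d.2); case: (rot d).2.
  rewrite cards0 addn0; apply: subset_leq_card; apply/subsetP => d; rewrite !inE.
  by case: (d.2); case: (rot d).2.
have gdv : forall bb, {in M &, injective (g bb)}.
  move=> bb u u' uM u'M Eg; have /and3P [/eqP d1 _ _] := gP bb u uM.
  have /and3P [/eqP d2 _ _] := gP bb u' u'M; by rewrite -d1 -d2 Eg.
have Woi_ge : #|M| <= #|Woi|.
  rewrite -(card_in_imset (gdv true)); apply: subset_leq_card; apply/subsetP => d /imsetP [u uM ->].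
  by rewrite inE; have /and3P [_ /eqP -> H] := gP true u uM; move: H; case: (rot _).2.
set d1 : D := (e, false).
move/and5P: Hc => [c2 c3 c4 l23 l34].
set i2 := findex rot d1 (b, true) in l23.
set i3 := findex rot d1 (a, false) in l23 l34.
set i4 := findex rot d1 (f, true) in l34.
have ord4 : i4 < order rot d1 by exact: findex_max.
have p2i : (fun m => (iter m rot d1).2) i2 by rewrite /= iter_findex.
have [m1 m1i /andP [p1 q1]] := @step_lem (fun m => (iter m rot d1).2) i2 isT p2i.
have p30 : ~~ (fun m => (iter (i3 + m) rot d1).2) 0 by rewrite /= addn0 iter_findex.
have p3i : (fun m => (iter (i3 + m) rot d1).2) (i4 - i3) by rewrite /= subnKC ?iter_findex // ltnW.
have [m mi /andP [p3 q3]] := @step_lem (fun m => (iter (i3 + m) rot d1).2) _ p30 p3i.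
rewrite /= addnS in q3.
set z1 := iter m1 rot d1.
set z3 := iter (i3 + m) rot d1.
have z13 : z1 != z3.
  have h3 : i3 + m < order rot d1.
    by apply: (ltn_trans _ ord4); rewrite -ltn_subRL.
  have h1 : m1 < order rot d1.
    apply: (ltn_trans _ h3); apply: (ltn_trans m1i); apply: (leq_trans l23); apply: leq_addr.
  apply/eqP => Ez; have := findex_iter h1.
  rewrite -/z1 Ez /z3 (findex_iter h3) => Em.
  have : m1 < i3 + m. apply: (ltn_trans m1i); apply: (leq_trans l23); apply: leq_addr.
  by rewrite Em ltnn.
have dz : forall n, dvert src tgt (iter n rot d1) = v.
  by move=> n; rewrite (iter_pres rdv) /d1 /dvert /=.
have vM : v \in M.
  rewrite inM; apply/andP; split; apply/eqP => vs.
    by move: (proj2 (Hs sG) erefl e); rewrite He vs eqxx.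
  by move: (proj2 (Ht tG) erefl b); rewrite Hb vs eqxx.
have Wio_ge : #|M :\ v| + 2 <= #|Wio|.
  have -> : 2 = #|[set z1; z3]| by rewrite cards2 z13.
  rewrite -(card_in_imset (f := g false) (D := M :\ v)); last first.
    by move=> u u' /setD1P [_ uM] /setD1P [_ u'M]; apply: gdv.
  rewrite -cardsUI.
  have -> : g false @: (M :\ v) :&: [set z1; z3] = set0.
    apply/setP => z; rewrite !inE; apply/negbTE; apply/negP => /andP [/imsetP [u /setD1P [uv uM] ->]].
    have /and3P [/eqP du _ _] := gP false u uM.
    by move/orP => [] /eqP Eu; move: du uv; rewrite Eu ?dz => ->; rewrite eqxx.
  rewrite cards0 addn0; apply: subset_leq_card; apply/subsetP => z; rewrite !inE.
  move/orP => [/imsetP [u /setD1P [uv uM] ->]|/orP [] /eqP ->].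
  - by have /and3P [_ /eqP -> H] := gP false u uM; move: H; case: (rot _).2.
  - by rewrite /z1 -iterS p1.
  - by rewrite /z3 -iterS q3 p3.
have cMv : #|M| = #|M :\ v| + 1 by rewrite (cardsD1 v M) vM addnC.
have e1 : fcard (phi rot) predT + #|V| = #|E| + 2 by rewrite addnC; exact: g0.
exact: (arith totW cardW cardA e1 cardM cMv WW Woi_ge Wio_ge).
Qed.
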